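(* Let $V$ be a finite set, $h:2^V\to\mathbb{R}_{\ge0}$ a non-negative submodular function, $a\in\mathbb{R}^V$ with $\max_ia_i>0$, $f(\delta):=\min_{S\subseteq V}h_\delta(S)$ with $h_\delta(S):=h(S)-\delta a(S)$, and $\delta^*$ the largest root of $f$. Let $\delta^{(1)}>\dots>\delta^{(\ell)}=\delta^*$ be the iterates of the look-ahead Newton–Dinkelbach method on $f$ (with the initialization in the context), and for $i\in[\ell]$ let $S^{(i)}\in\operatorname{argmax}\{a(S): S\in\operatorname{argmin}_{T\subseteq V}h_{\delta^{(i)}}(T)\}$. Let $q:=\lfloor(\ell+3)/4\rfloor$ and $T_i:=S^{(\ell-4(i-1))}$ for $i\in[q]$. Then $h_{\delta^*}$ is a non-negative submodular function, the sets $T_1,\dots,T_q$ are distinct, and $h_{\delta^*}(T_{i+1})>4h_{\delta^*}(T_i)$ for all $i\in[q-1]$.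
   Context: $a(S):=\sum_{i\in S}a_i$. Supergradients of $f$ at $\delta$ are obtained as $-a(S)$ for minimizers $S$ of $h_\delta$. Initialization: $\delta^{(1)}:=\min\{h(\{i\})/a_i: a_i>0\}$; if $f(\delta^{(1)})=0$ stop; otherwise $g^{(1)}:=-a(S)$ for a minimizer $S$ of $h_{\delta^{(1)}}$ (then $g^{(1)}<0$). Look-ahead Newton–Dinkelbach method: for $i=1,2,\dots$: if $f(\delta^{(i)})=0$ return $\delta^{(i)}$; else $\delta:=\delta^{(i)}-f(\delta^{(i)})/g^{(i)}$ with a supergradient $g$ at $\delta$; return NO ROOT if $f(\delta)<0$ and $g\ge0$; let $\delta':=2\delta-\delta^{(i)}$ with supergradient $g'$; if $f(\delta')<0$ and $g'<0$ replace $(\delta,g)$ by $(\delta',g')$; set $\delta^{(i+1)}:=\delta$, $g^{(i+1)}:=g$. *)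

(* Defs.v *)
From HB Require Import structures.
From mathcomp Require Import all_boot all_order all_algebra.
Set Implicit Arguments. Unset Strict Implicit. Unset Printing Implicit Defensive.
Import Order.TTheory GRing.Theory Num.Theory.
Local Open Scope ring_scope.

Section Defs.
Variables (R : realFieldType) (V : finType).

Definition aset (a : V -> R) (S : {set V}) : R := \sum_(i in S) a i.

Definition hdelta (h : {set V} -> R) (a : V -> R) (d : R) (S : {set V}) : R :=
  h S - d * aset a S.

Definition submodular (h : {set V} -> R) : Prop :=
  forall A B : {set V}, h (A :|: B) + h (A :&: B) <= h A + h B.

Definition nonneg_setfun (h : {set V} -> R) : Prop := forall S, 0 <= h S.

Definition fmin (h : {set V} -> R) (a : V -> R) (d : R) : R :=
  \big[Order.min/hdelta h a d set0]_(S : {set V}) hdelta h a d S.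

Definition is_minimizer (h : {set V} -> R) (a : V -> R) (d : R) (S : {set V}) : Prop :=
  forall T, hdelta h a d S <= hdelta h a d T.

Definition is_supergrad (h : {set V} -> R) (a : V -> R) (d g : R) : Prop :=
  exists S, is_minimizer h a d S /\ g = - aset a S.

Definition is_largest_root (h : {set V} -> R) (a : V -> R) (d : R) : Prop :=
  fmin h a d = 0 /\ forall x, fmin h a x = 0 -> x <= d.

(* A terminating run of the look-ahead Newton-Dinkelbach method returning
   delta ell, with iterates delta 1, ..., delta ell and supergradients g i
   (indices 1-based). *)
Definition lookahead_ND_run (h : {set V} -> R) (a : V -> R) (ell : nat)
    (delta g : nat -> R) : Prop :=
  let f := fmin h a in
  [/\ ((1 <= ell)%N /\
      (exists i, 0 < a i /\ delta 1%N = h [set i] / a i) /\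
      (forall i, 0 < a i -> delta 1%N <= h [set i] / a i)),
      ((1 < ell)%N -> is_supergrad h a (delta 1%N) (g 1%N)),
      (forall i, (1 <= i < ell)%N -> f (delta i) != 0),
      (forall i, (1 <= i < ell)%N ->
        exists d gd d' gd',
          [/\ d = delta i - f (delta i) / g i,
              is_supergrad h a d gd /\ ~ (f d < 0 /\ 0 <= gd),
              d' = 2 * d - delta i,
              is_supergrad h a d' gd' &
              (if (f d' < 0) && (gd' < 0)
               then delta i.+1 = d' /\ g i.+1 = gd'
               else delta i.+1 = d /\ g i.+1 = gd)]) &
      f (delta ell) = 0].

End Defs.

(* Main.v *)
Require Import Defs.
From HB Require Import structures.
From mathcomp Require Import all_boot all_order all_algebra.
From mathcomp Require Import ring lra zify.
Import Order.TTheory GRing.Theory Num.Theory.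
Local Open Scope ring_scope.
Set Implicit Arguments. Unset Strict Implicit.

Section H.
Variables (R : realFieldType) (V : finType) (h : {set V} -> R) (a : V -> R).

Lemma fmin_le d S : fmin h a d <= hdelta h a d S.
Proof. exact: bigmin_le. Qed.

Lemma fmin_ex d : exists S, is_minimizer h a d S /\ fmin h a d = hdelta h a d S.
Proof.
case: (@arg_minP _ _ _ (set0 : {set V}) predT (hdelta h a d) isT) => S _ HS.
exists S; split; first by move=> T; apply: HS.
apply/le_anti; rewrite fmin_le /=; apply/bigmin_geP; split; first exact: HS.
by move=> T _; apply: HS.
Qed.

Lemma min_fmin d S : is_minimizer h a d S -> hdelta h a d S = fmin h a d.
Proof.
move=> HS; have [U [HU ->]] := fmin_ex d; apply/le_anti.
by rewrite HS HU.
Qed.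

Lemma hdeltaE d ds S : hdelta h a d S = hdelta h a ds S - (d - ds) * aset a S.
Proof. rewrite /hdelta; ring. Qed.

Lemma aset1 i : aset a [set i] = a i.
Proof. by rewrite /aset big_set1. Qed.

Lemma asetUI A B : aset a (A :|: B) + aset a (A :&: B) = aset a A + aset a B.
Proof.
rewrite /aset !(big_mkcond (fun i => i \in _)) -!big_split /=.
apply: eq_bigr => i _; rewrite in_setU in_setI.
by case: (i \in A); case: (i \in B); rewrite /= ?addr0 ?add0r.
Qed.
Lemma mono_a x y S S' : x < y -> is_minimizer h a x S -> is_minimizer h a y S' ->
  aset a S <= aset a S'.
Proof.
move=> xy HS HS'; have := HS S'; have := HS' S; rewrite /hdelta => h1 h2.
have E : (y - x) * (aset a S - aset a S') <= 0.
  have -> : (y - x) * (aset a S - aset a S') = (h S - x * aset a S - (h S' - x * aset a S')) + (h S' - y * aset a S' - (h S - y * aset a S)) by ring.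
  by rewrite -[0](addr0 0) lerD // subr_le0.
by move: E; rewrite pmulr_rle0 ?subr_gt0 // subr_le0.
Qed.

Lemma mono_phi ds x y S S' : ds <= x -> x < y -> is_minimizer h a x S ->
  is_minimizer h a y S' -> hdelta h a ds S <= hdelta h a ds S'.
Proof.
move=> dx xy HS HS'; have ha := mono_a xy HS HS'.
have := HS S'; rewrite (hdeltaE x ds S) (hdeltaE x ds S') => h1.
have E : (x - ds) * aset a S <= (x - ds) * aset a S' by rewrite ler_wpM2l // subr_ge0.
by have := lerD h1 E; rewrite !subrK.
Qed.

Lemma same_phi ds x S U : ds <= x -> is_minimizer h a x S -> is_minimizer h a x U ->
  aset a U <= aset a S -> hdelta h a ds U <= hdelta h a ds S.
Proof.
move=> dx HS HU ha; have := HU S; rewrite (hdeltaE x ds S) (hdeltaE x ds U) => h1.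
have E : (x - ds) * aset a U <= (x - ds) * aset a S by rewrite ler_wpM2l // subr_ge0.
by have := lerD h1 E; rewrite !subrK.
Qed.

Lemma neg_above ds : nonneg_setfun h -> (exists i, 0 < a i) -> is_largest_root h a ds ->
  forall x, ds < x -> fmin h a x < 0.
Proof.
move=> hnn [i0 ai0] [_ Hroot] x dsx.
have P0 : (fun S : {set V} => 0 < aset a S) [set i0] by rewrite /= aset1.
case: (@arg_minP _ _ _ _ (fun S : {set V} => 0 < aset a S) (fun S => h S / aset a S) P0).
move=> Sr /= Pr Hr; set r := h Sr / aset a Sr.
have r0 : 0 <= r by rewrite /r divr_ge0 // ltW.
have hr : hdelta h a r Sr = 0 by rewrite /hdelta /r mulrVK ?subrr // unitfE gt_eqF.
have fr : fmin h a r = 0.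
  apply/le_anti; rewrite -{1}hr fmin_le /=.
  have [U [_ ->]] := fmin_ex r; rewrite /hdelta subr_ge0.
  case: (ltP 0 (aset a U)) => aU.
    by rewrite -ler_pdivlMr //; apply: Hr.
  by apply: le_trans (hnn U); rewrite mulr_ge0_le0.
have rds := Hroot _ fr.
apply: (le_lt_trans (fmin_le _ Sr)); rewrite -hr /hdelta ltrD2l ltrN2.
by rewrite ltr_pM2r //; apply: le_lt_trans dsx.
Qed.
Lemma newton0 x U : is_minimizer h a x U -> aset a U != 0 ->
  hdelta h a (x - fmin h a x / - aset a U) U = 0.
Proof.
move=> HU A0; rewrite -(min_fmin HU) /hdelta; field; by rewrite ?oppr_eq0.
Qed.
End H.

Theorem lemma5p4 (R : realFieldType) (V : finType)
    (h : {set V} -> R) (a : V -> R) (dstar : R)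
    (ell : nat) (delta g : nat -> R) (Sit : nat -> {set V}) :
  nonneg_setfun h ->
  submodular h ->
  (exists i, 0 < a i) ->
  is_largest_root h a dstar ->
  lookahead_ND_run h a ell delta g ->
  (* delta 1 > ... > delta ell = dstar *)
  (forall i, (1 <= i < ell)%N -> delta i.+1 < delta i) ->
  delta ell = dstar ->
  (* S i in argmax { a(S) : S in argmin h_{delta i} } *)
  (forall i, (1 <= i <= ell)%N ->
     is_minimizer h a (delta i) (Sit i) /\
     forall T, is_minimizer h a (delta i) T -> aset a T <= aset a (Sit i)) ->
  let q := ((ell + 3) %/ 4)%N in
  let T := fun i : nat => Sit (ell - 4 * (i - 1))%N in
  [/\ nonneg_setfun (hdelta h a dstar),
      submodular (hdelta h a dstar),
      (forall i j, (1 <= i <= q)%N -> (1 <= j <= q)%N -> i != j -> T i != T j) &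
      (forall i, (1 <= i < q)%N ->
         hdelta h a dstar (T i.+1) > 4 * hdelta h a dstar (T i))].
Proof.
move=> hnn hsub hpos hroot [[ell1 [[i0 [ai0 d1]] d1le]] g1 nz iter fell] dec dell HS q T.
set phi := hdelta h a dstar.
have phi0 : forall S, 0 <= phi S.
  by move=> S; rewrite /phi -hroot.1; apply: fmin_le.
have part2 : submodular phi.
  move=> A B; rewrite /phi /hdelta; have := asetUI a A B; have := hsub A B.
  move=> H1 H2.
  have -> : h (A :|: B) - dstar * aset a (A :|: B) + (h (A :&: B) - dstar * aset a (A :&: B))
     = h (A :|: B) + h (A :&: B) - dstar * (aset a (A :|: B) + aset a (A :&: B)) by ring.
  rewrite H2 mulrDr; lra.
have dlt : forall i k, (1 <= i)%N -> (i + k.+1 <= ell)%N -> delta (i + k.+1)%N < delta i.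
  move=> i k i1; elim: k => [|k IH] H.
    by rewrite addn1; apply: dec; rewrite i1 /=; rewrite addn1 in H.
  apply: lt_trans (IH _); last by apply: leq_trans H; rewrite leq_add2l.
  rewrite addnS; apply: dec; rewrite -addnS H andbT.
  by apply: leq_trans i1 (leq_addr _ _).
have dle : forall i j, (1 <= i)%N -> (i <= j)%N -> (j <= ell)%N -> delta j <= delta i.
  move=> i j i1 ij jl; case: (ltngtP i j) ij => // [ij _|-> _]; last by [].
  have -> : j = (i + (j - i).-1.+1)%N by rewrite prednK ?subn_gt0 // subnKC // ltnW.
  by apply/ltW/dlt => //; rewrite prednK ?subn_gt0 // subnKC // ltnW.
have tpos : forall i, (1 <= i < ell)%N -> dstar < delta i.
  move=> i /andP[i1 il]; rewrite -dell.
  have -> : ell = (i + (ell - i).-1.+1)%N by rewrite prednK ?subn_gt0 // subnKC // ltnW.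
  by apply/dlt => //; rewrite prednK ?subn_gt0 // subnKC // ltnW.
have tge : forall i, (1 <= i <= ell)%N -> dstar <= delta i.
  by move=> i /andP[i1 il]; rewrite -dell; apply: dle.
have G : forall i, (1 <= i < ell)%N -> is_supergrad h a (delta i) (g i).
  move=> [|[|i]] // /andP[_ il].
  have /iter [d [gd [d' [gd' [_ [Hd _] _ Hd' Hif]]]]] : (1 <= i.+1 < ell)%N.
    by rewrite /= ltnW.
  by case: ifP Hif => _ [-> ->].
have fle : forall i, (1 <= i <= ell)%N -> fmin h a (delta i) <= 0.
  elim=> [//|i IH] /andP[_ il]; case: i IH il => [|i] IH il.
    apply: le_trans (fmin_le h a _ [set i0]) _.
    by rewrite d1 /hdelta aset1 divfK ?gt_eqF // subrr.
  have IHi := IH (ltnW il).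
  have fneg : fmin h a (delta i.+1) < 0.
    by rewrite lt_neqAle IHi andbT; apply: nz.
  have [U [HU gU]] := G i.+1 il.
  have AU : aset a U != 0.
    apply/eqP => A0; move: fneg; rewrite -(min_fmin HU) /hdelta A0 mulr0 subr0.
    by rewrite ltNge hnn.
  have /iter [d [gd [d' [gd' [Hd _ _ _ Hif]]]]] : (1 <= i.+1 < ell)%N by [].
  case: ifP Hif => [/andP[H1 _] [-> _] //|_ [-> _]]; first exact: ltW.
  by rewrite Hd gU; apply: le_trans (fmin_le h a _ U) _; rewrite newton0.
have fneg : forall i, (1 <= i < ell)%N -> fmin h a (delta i) < 0.
  move=> i /andP[i1 il]; rewrite lt_neqAle nz ?i1 // fle //.
  by rewrite i1 ltnW.
have step : forall i, (1 <= i < ell)%N -> exists U,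
   let d := delta i - fmin h a (delta i) / g i in
   [/\ is_minimizer h a (delta i) U, 0 < aset a U,
       phi U = (d - dstar) * aset a U &
       ((delta i.+1 = 2 * d - delta i /\ fmin h a (delta i.+1) < 0) \/
        (delta i.+1 = d /\ 2 * d - delta i <= dstar))].
  move=> i Hi; have [U [HU gU]] := G i Hi; exists U => d.
  have AU : 0 < aset a U.
    have := fneg i Hi; rewrite -(min_fmin HU) (hdeltaE h a _ dstar) -/phi => H.
    have : 0 < (delta i - dstar) * aset a U by have := phi0 U; lra.
    by rewrite pmulr_rgt0 // subr_gt0 tpos.
  have hd0 : hdelta h a d U = 0 by rewrite /d gU newton0 // gt_eqF.
  split => //.
    by move: hd0; rewrite (hdeltaE h a _ dstar) -/phi => /eqP; rewrite subr_eq0 => /eqP.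
  have /iter [d0 [gd [d' [gd' [Hd _ Hd' [U' [HU' gU']] Hif]]]]] := Hi.
  rewrite -/d in Hd; subst d0.
  case: ifP Hif => [/andP[H1 _] [-> _]|Hc [-> _]]; first by left; rewrite -Hd'.
  right; split => //; rewrite -Hd'; rewrite leNgt; apply/negP => dd.
  move: Hc; have fd := neg_above hnn hpos hroot dd; rewrite fd /= gU'.
  rewrite oppr_lt0; move/negbT; apply/negP; rewrite negbK.
  have := fd; rewrite -(min_fmin HU') (hdeltaE h a _ dstar) -/phi => H.
  have : 0 < (d' - dstar) * aset a U' by have := phi0 U'; lra.
  by rewrite pmulr_rgt0 // subr_gt0.
pose P k := (delta k - dstar) * aset a (Sit k).
have C4 : forall k, (1 <= k <= ell)%N -> phi (Sit k) <= P k.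
  move=> k Hk; have := fle k Hk.
  by rewrite -(min_fmin (HS k Hk).1) (hdeltaE h a _ dstar) -/phi subr_le0.
have C4s : forall k, (1 <= k < ell)%N -> phi (Sit k) < P k.
  move=> k Hk; have := fneg k Hk; have Hk' : (1 <= k <= ell)%N.
    by case/andP: Hk => -> /ltnW.
  by rewrite -(min_fmin (HS k Hk').1) (hdeltaE h a _ dstar) -/phi subr_lt0.
have Ppos : forall k, (1 <= k < ell)%N -> 0 < P k.
  by move=> k Hk; apply: le_lt_trans (phi0 _) (C4s k Hk).
have C12 : forall i, (1 <= i < ell)%N -> 2 * P i.+1 <= P i /\ P i.+1 <= phi (Sit i).
  move=> i Hi; have [U [HU AU phiU br]] := step i Hi.
  have Hi' : (1 <= i <= ell)%N by case/andP: Hi => -> /ltnW.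
  have Hi1 : (1 <= i.+1 <= ell)%N by case/andP: Hi.
  move: phiU br; set D0 := delta i - _ / _ => phiU br.
  have t0 : 0 < delta i - dstar by rewrite subr_gt0 tpos.
  have t1 : 0 <= delta i.+1 - dstar by rewrite subr_ge0 tge.
  have tt : delta i.+1 - dstar <= delta i - dstar by rewrite lerD2r ltW // dec.
  have ba : aset a U <= aset a (Sit i) by apply: (HS i Hi').2.
  have ab : aset a (Sit i.+1) <= aset a U.
    by apply: (mono_a (dec i Hi)) => //; apply: (HS _ Hi1).1.
  have fU : phi U - (delta i - dstar) * aset a U < 0.
    by have := fneg i Hi; rewrite -(min_fmin HU) (hdeltaE h a _ dstar).
  have Dt : D0 - dstar < delta i - dstar.
    by rewrite -(ltr_pM2r AU) -phiU -subr_lt0.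
  have phiSU : phi U <= phi (Sit i) by apply: (same_phi (tge i Hi') (HS i Hi').1 HU ba).
  have minU : phi U - (delta i - dstar) * aset a U <=
              phi (Sit i.+1) - (delta i - dstar) * aset a (Sit i.+1).
    by have := HU (Sit i.+1); rewrite !(hdeltaE h a (delta i) dstar).
  have a0 : 0 <= aset a (Sit i) by apply: le_trans (ltW AU) ba.
  have tD : delta i.+1 - dstar <= D0 - dstar.
    by case: br => [[-> _]|[-> _]]; lra.
  split; last first.
    apply: le_trans phiSU; rewrite phiU /P.
    apply: le_trans (_ : _ <= (delta i.+1 - dstar) * aset a U) _.
      by rewrite ler_wpM2l.
    by rewrite ler_wpM2r // ltW.
  case: br => [[E1 f1]|[E1 E2]].
  - have f1' : phi (Sit i.+1) < (delta i.+1 - dstar) * aset a (Sit i.+1).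
      by move: f1; rewrite -(min_fmin (HS _ Hi1).1) (hdeltaE h a _ dstar) subr_lt0.
    have k1 : (delta i - D0) * (2 * aset a (Sit i.+1)) < (delta i - D0) * aset a U.
      move: f1' minU; rewrite phiU E1; lra.
    have k2 : 2 * aset a (Sit i.+1) < aset a U.
      by move: k1; rewrite ltr_pM2l // subr_gt0; lra.
    rewrite /P mulrCA; apply: le_trans (_ : _ <= (delta i.+1 - dstar) * aset a U) _.
      by rewrite ler_wpM2l // ltW.
    apply: le_trans (_ : _ <= (delta i - dstar) * aset a U) _.
      by rewrite ler_wpM2r // ltW.
    by rewrite ler_wpM2l // ltW.
  - have k : 2 * (delta i.+1 - dstar) <= delta i - dstar by rewrite E1; lra.
    rewrite /P mulrA; apply: le_trans (_ : _ <= 2 * (delta i.+1 - dstar) * aset a (Sit i)) _.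
      by rewrite ler_wpM2l ?mulr_ge0 //; apply: le_trans ab ba.
    by rewrite ler_wpM2r.
have key : forall k, (1 <= k)%N -> (k.+4 <= ell)%N -> 4 * phi (Sit k.+4) < phi (Sit k).
  move=> k k1 kl.
  have [_ c0] := C12 k ltac:(apply/andP; split; lia).
  have [c1 _] := C12 k.+1 ltac:(apply/andP; split; lia).
  have [c2 _] := C12 k.+2 ltac:(apply/andP; split; lia).
  have [c3 _] := C12 k.+3 ltac:(apply/andP; split; lia).
  have c4 := C4 k.+4 ltac:(apply/andP; split; lia).
  have pp := Ppos k.+1 ltac:(apply/andP; split; lia).
  have p0 := phi0 (Sit k.+4).
  lra.
have dlt' : forall i j, (1 <= i)%N -> (i < j)%N -> (j <= ell)%N -> delta j < delta i.
  move=> i j i1 ij jl.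
  have -> : j = (i + (j - i).-1.+1)%N by lia.
  apply: dlt => //; lia.
have mono : forall m k, (1 <= m)%N -> (m <= k)%N -> (k <= ell)%N -> phi (Sit k) <= phi (Sit m).
  move=> m k m1 mk kl; case: (ltngtP m k) mk => // [lt|->] _; last by [].
  apply: (mono_phi (tge k _) (dlt' m k m1 lt kl)).
  - by apply/andP; split => //; lia.
  - by apply: (HS k _).1; apply/andP; split => //; lia.
  - by apply: (HS m _).1; apply/andP; split => //; lia.
have Tidx : forall i, (1 <= i)%N -> (4 * i + 1 <= ell)%N ->
    T i = Sit (ell - 4 * i)%N.+4 /\ T i.+1 = Sit (ell - 4 * i)%N.
  by move=> i i1 il; rewrite /T; split; congr Sit; lia.
have qE : forall j, (j <= q)%N = (j * 4 <= ell + 3)%N by move=> j; rewrite /q leq_divRL.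
split => //.
- move=> i j /andP[i1 iq] /andP[j1 jq] ij.
  suff H : forall i j, (1 <= i)%N -> (i <= q)%N -> (1 <= j)%N -> (j <= q)%N ->
      (i < j)%N -> T i != T j.
    case: (ltngtP i j) ij => // [lt|lt] _; first exact: H.
    by rewrite eq_sym; apply: H.
  clear ij i1 iq j1 jq i j => i j i1 iq j1 jq lt.
  rewrite qE in iq; rewrite qE in jq.
  have [E1 _] := Tidx i i1 ltac:(lia).
  have k1 : (1 <= ell - 4 * i)%N by lia.
  have K := key _ k1 ltac:(lia).
  have M : phi (Sit (ell - 4 * i)%N) <= phi (T j).
    by apply: mono; rewrite /T; lia.
  have p0 := phi0 (Sit (ell - 4 * i)%N.+4).
  apply/eqP => E; move: M; rewrite -E E1; lra.
- move=> i /andP[i1 iq]; rewrite qE in iq.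
  have [E1 E2] := Tidx i i1 ltac:(lia).
  rewrite E1 E2; apply: key; lia.
Qed.
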